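(* Let $a$ and $b$ be coprime odd integers and let $\beta$ be a non-negative integer. Then $EG_{(a,b)}(\beta)\neq\emptyset$ if and only if $\beta\in\{0,1\}$; equivalently, $EG_{(a,b)}(\beta)=\emptyset$ if and only if $\beta\geq 2$.
   Context: For coprime nonzero integers $a,b$ and an integer $\beta\geq0$, $EG_{(a,b)}(\beta)$ is the set of positive integers $d$ such that $2^\beta d\mid(a^k+b^k)$ for some even integer $k\geq 2$. *)

(* Defs.v *)
From mathcomp Require Import all_boot all_order all_algebra.
Set Implicit Arguments. Unset Strict Implicit. Unset Printing Implicit Defensive.
Import Order.TTheory GRing.Theory Num.Theory.
Local Open Scope ring_scope.

Definition EG (a b : int) (beta : nat) : nat -> Prop :=
  fun d => (0 < d)%N /\
    exists k : nat, [/\ (2 <= k)%N, ~~ odd k &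
      ((2 ^ beta * d)%:Z %| a ^+ k + b ^+ k)%Z].

(* Main.v *)
Require Import Defs.
From mathcomp Require Import all_boot all_order all_algebra.
From mathcomp Require Import ring.
Import Order.TTheory GRing.Theory Num.Theory.
Local Open Scope ring_scope.

Lemma even_pow_nat (a : int) (k : nat) : ~~ odd k ->
  a ^+ k = (`|a| ^ k)%N%:Z.
Proof.
move=> ek; rewrite -abszX gez0_abs //; exact: exprn_even_ge0.
Qed.

Lemma oddsq_mod4 (x j : nat) : odd x -> ((x ^ (j.*2)) %% 4 = 1)%N.
Proof.
move=> ox; rewrite -[x](odd_double_half x) ox.
set m := x./2.
have -> : ((1 + m.*2) ^ j.*2 = (4 * (m * m + m) + 1) ^ j)%N.
  rewrite -[j.*2]mul2n expnM; congr (_ ^ _)%N; rewrite -mul2n; ring.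
by rewrite -modnXm [(4 * _)%N]mulnC modnMDl modn_small // exp1n.
Qed.

Theorem theorem2p20 (a b : int) (beta : nat) :
  coprimez a b -> ~~ (2 %| a)%Z -> ~~ (2 %| b)%Z ->
  ((exists d : nat, EG a b beta d) <-> (beta <= 1)%N).
Proof.
move=> _ oa ob.
have oxa : odd `|a|%N by rewrite -[odd _]negbK -dvdn2; exact: oa.
have oxb : odd `|b|%N by rewrite -[odd _]negbK -dvdn2; exact: ob.
split.
- move=> [d [d0 [k [k2 ek hd]]]].
  rewrite leqNgt; apply/negP => hb.
  move: hd; rewrite (@even_pow_nat a k ek) (@even_pow_nat b k ek) -PoszD.
  rewrite /dvdz /= => hd.
  have h4 : (4 %| `|a| ^ k + `|b| ^ k)%N.
    apply: dvdn_trans hd; apply: dvdn_mulr.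
    by rewrite -[beta](subnK hb) expnD dvdn_mull.
  move: h4; rewrite -[k](odd_double_half k) (negbTE ek) add0n.
  by rewrite /dvdn -modnDm !oddsq_mod4.
- move=> hb; exists 1%N; split => //; exists 2%N; split => //.
  rewrite (@even_pow_nat a 2 isT) (@even_pow_nat b 2 isT) -PoszD.
  rewrite /dvdz /= muln1.
  have h2 : (2 %| `|a| ^ 2 + `|b| ^ 2)%N.
    by rewrite dvdn2 oddD !oddX oxa oxb.
  apply: dvdn_trans h2; case: beta hb => [|[|]] //.
Qed.
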